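(* Every probabilistic database in $\mathsf{FO}(\mathsf{TI})$ has the finite moments property.
   Context: Fix a countably infinite universe $U$. A database schema is a finite nonempty set of relation symbols with arities; facts are $R(u_1,\dots,u_{\mathrm{ar}(R)})$ with $u_i\in U$; an instance is a finite set of facts ($|D|$ = number of facts); $\mathrm{adom}(D)$ is the set of elements of $U$ occurring in $D$. A probabilistic database (PDB) is a discrete probability space $(\mathbb D,P)$ with $\mathbb D$ a nonempty countable set of instances. A PDB has the finite moments property if $\sum_{D\in\mathbb D}|D|^kP(\{D\})<\infty$ for all $k\in\mathbb N_+$. A PDB $\mathcal I$ is tuple-independent if for all pairwise distinct facts $f_1,\dots,f_k$, $\Pr_{I\sim\mathcal I}(f_1\in I,\dots,f_k\in I)=\prod_i\Pr_{I\sim\mathcal I}(f_i\in I)$. An FO-view consists of one first-order formula $\Phi_R(x_1,\dots,x_{\mathrm{ar}(R)})$ per output relation symbol $R$, evaluated under active domain semantics (quantifiers range over $\mathrm{adom}(D)$ and the formula's constants), mapping $D$ to the instance containing $R(\bar a)$ for all tuples $\bar a$ over $\mathrm{adom}(D)\cup\mathrm{adom}(\Phi_R)$ with $D\models\Phi_R[\bar a]$. The image of a PDB $(\mathbb D,P)$ under a view $V$ is the PDB on $V(\mathbb D)$ with $P'(\{D'\})=P(\{D:V(D)=D'\})$. $\mathsf{FO}(\mathsf{TI})$ is the class of images of tuple-independent PDBs under FO-views. *)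

(* Defs.v *)
From HB Require Import structures.
From mathcomp Require Import all_boot all_order all_algebra.
From mathcomp Require Import finmap.
From mathcomp Require Import all_classical all_reals all_analysis.

Set Implicit Arguments.
Unset Strict Implicit.
Unset Printing Implicit Defensive.

Import Order.TTheory GRing.Theory Num.Theory.
Local Open Scope classical_set_scope.
Local Open Scope ring_scope.
Local Open Scope fset_scope.

(* The universe U is fixed to be nat (a countably infinite set). *)
Definition U := nat.

(* A schema: a finite type S of relation symbols with arity ar : S -> nat.
   A fact R(u_1,...,u_ar(R)) is a pair (R, [u_1; ...; u_ar(R)]) of correct arity. *)
Section Schema.
Variables (S : finType) (ar : S -> nat).

Definition wf_fact (f : S * seq U) : bool := size f.2 == ar f.1.
Definition fact := {f : S * seq U | wf_fact f}.
Definition instance := {fset fact}.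

Definition adom (D : instance) : seq U := flatten [seq (val f).2 | f <- D].

Inductive term := TVar of nat | TConst of U.

Inductive form :=
| FAtom of S & seq term
| FEq of term & term
| FNot of form
| FAnd of form & form
| FOr of form & form
| FEx of nat & form
| FAll of nat & form.

Definition teval (env : nat -> U) (t : term) : U :=
  match t with TVar x => env x | TConst c => c end.

Definition upd (env : nat -> U) (x : nat) (a : U) : nat -> U :=
  fun y => if y == x then a else env y.

Definition tconsts (t : term) : seq U :=
  match t with TVar _ => [::] | TConst c => [:: c] end.

Fixpoint consts (phi : form) : seq U :=
  match phi with
  | FAtom _ ts => flatten (map tconsts ts)
  | FEq t1 t2 => tconsts t1 ++ tconsts t2
  | FNot p => consts p
  | FAnd p q | FOr p q => consts p ++ consts q
  | FEx _ p | FAll _ p => consts p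
  end.

Definition tvars (t : term) : seq nat :=
  match t with TVar x => [:: x] | TConst _ => [::] end.

Fixpoint fv (phi : form) : seq nat :=
  match phi with
  | FAtom _ ts => flatten (map tvars ts)
  | FEq t1 t2 => tvars t1 ++ tvars t2
  | FNot p => fv p
  | FAnd p q | FOr p q => fv p ++ fv q
  | FEx x p | FAll x p => [seq y <- fv p | y != x]
  end.

Fixpoint atoms_ok (phi : form) : bool :=
  match phi with
  | FAtom r ts => size ts == ar r
  | FEq _ _ => true
  | FNot p => atoms_ok p
  | FAnd p q | FOr p q => atoms_ok p && atoms_ok q
  | FEx _ p | FAll _ p => atoms_ok p
  end.

(* phi is a formula phi(x_1,...,x_n): free variables among x_1..x_n,
   where x_i is encoded as the variable number i-1 *)
Definition form_wf (n : nat) (phi : form) : bool :=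
  atoms_ok phi && all (fun x => x < n)%N (fv phi).

Fixpoint holds (D : instance) (dom : seq U) (env : nat -> U) (phi : form) : bool :=
  match phi with
  | FAtom r ts => (r, map (teval env) ts) \in [seq val f | f <- D]
  | FEq t1 t2 => teval env t1 == teval env t2
  | FNot p => ~~ holds D dom env p
  | FAnd p q => holds D dom env p && holds D dom env q
  | FOr p q => holds D dom env p || holds D dom env q
  | FEx x p => has (fun a => holds D dom (upd env x a) p) dom
  | FAll x p => all (fun a => holds D dom (upd env x a) p) dom
  end.

(* active-domain semantics: D |= phi[a] with quantifiers over adom(D) ∪ adom(phi) *)
Definition sat (D : instance) (phi : form) (a : seq U) : bool :=
  holds D (adom D ++ consts phi) (fun i => nth 0%N a i) phi.

End Schema.

Fixpoint tuples (s : seq U) (n : nat) : seq (seq U) :=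
  match n with
  | 0 => [:: [::]]
  | n'.+1 => [seq a :: t | a <- s, t <- tuples s n']
  end.

Record fo_view (S : finType) (ar : S -> nat) (S' : finType) (ar' : S' -> nat) := FOView {
  vphi : S' -> form S;
  vphi_wf : forall R : S', form_wf ar (ar' R) (vphi R)
}.

Definition view_inst (S : finType) (ar : S -> nat) (S' : finType) (ar' : S' -> nat)
  (V : fo_view ar ar') (D : instance ar) : instance ar' :=
  [fset f | f in pmap insub
     (flatten [seq [seq (R, a) | a <- tuples (adom D ++ consts (vphi V R)) (ar' R)
                               & sat D (vphi V R) a]
              | R <- enum S'])].

Record pdb (R : realType) (S : finType) (ar : S -> nat) := PDB {
  pdb_dom : set (instance ar);
  pdb_P : instance ar -> R;
  pdb_dom_nonempty : pdb_dom !=set0;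
  pdb_dom_countable : countable pdb_dom;
  pdb_P_ge0 : forall D, pdb_dom D -> 0 <= pdb_P D;
  pdb_P_sum1 : (\esum_(D in pdb_dom) (pdb_P D)%:E = 1)%E
}.

Definition Pr (R : realType) (S : finType) (ar : S -> nat) (I : pdb R ar)
  (E : set (instance ar)) : R :=
  fine (\esum_(D in pdb_dom I `&` E) (pdb_P I D)%:E)%E.

Definition finite_moments (R : realType) (S : finType) (ar : S -> nat)
  (dom : set (instance ar)) (P : instance ar -> R) : Prop :=
  forall k : nat, (0 < k)%N ->
    (\esum_(D in dom) ((#|` D|%:R ^+ k * P D)%:E) < +oo)%E.

Definition tuple_independent (R : realType) (S : finType) (ar : S -> nat)
  (I : pdb R ar) : Prop :=
  forall fs : seq (fact ar), uniq fs ->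
    Pr I [set D | forall f, f \in fs -> f \in D]
    = \prod_(f <- fs) Pr I [set D | f \in D].

Definition in_FO_TI (R : realType) (S' : finType) (ar' : S' -> nat) (J : pdb R ar') : Prop :=
  exists (S : finType) (ar : S -> nat) (I : pdb R ar) (V : fo_view ar ar'),
    (0 < #|S|)%N /\ tuple_independent I /\
    pdb_dom J = (view_inst V @` pdb_dom I)%classic /\
    (forall D', pdb_dom J D' -> pdb_P J D' = Pr I [set D | view_inst V D = D']).

(* Main.v *)
Require Import Defs.
From HB Require Import structures.
From mathcomp Require Import all_boot all_order all_algebra.
From mathcomp Require Import finmap.
From mathcomp Require Import all_classical all_reals all_analysis.
From mathcomp Require Import lra zify.

Set Implicit Arguments.
Unset Strict Implicit.
Unset Printing Implicit Defensive.
Import Order.TTheory GRing.Theory Num.Theory.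

Section Esum.
Local Open Scope classical_set_scope.
Local Open Scope ring_scope.
Local Open Scope ereal_scope.

Lemma esumZ_glob (R : realType) (T : choiceType) (A : set T) (a : T -> \bar R) (r : R) :
  (0 <= r)%R -> (forall x, 0 <= a x) ->
  \esum_(x in A) (r%:E * a x) = r%:E * \esum_(x in A) a x.
Proof.
move=> r0 a0; rewrite /esum -ereal_supZl//; last first.
  apply/set0P; exists 0; exists set0; first exact: fsets_set0.
  by rewrite fsbig_set0.
congr ereal_sup; apply/seteqP; split => y /=.
  move=> [X hX <-]; exists (\sum_(x \in X) a x); first by exists X.
  by rewrite ge0_mule_fsumr.
move=> [z [X hX <-] <-]; exists X => //.
by rewrite ge0_mule_fsumr.
Qed.

Lemma esumZ (R : realType) (T : choiceType) (A : set T) (a : T -> \bar R) (r : R) :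
  (0 <= r)%R -> (forall x, A x -> 0 <= a x) ->
  \esum_(x in A) (r%:E * a x) = r%:E * \esum_(x in A) a x.
Proof.
move=> r0 a0; rewrite esum_mkcond [X in _ = _ * X]esum_mkcond -esumZ_glob//.
  by apply: eq_esum => x _; case: ifP => //; rewrite mule0.
by move=> x; case: ifPn => // /set_mem /a0.
Qed.

End Esum.

Section PDB.
Local Open Scope classical_set_scope.
Local Open Scope ring_scope.
Local Open Scope ereal_scope.
Variables (R : realType) (S : finType) (ar : S -> nat) (I : pdb R ar).

Definition Ex (X : instance ar -> R) : \bar R :=
  \esum_(D in pdb_dom I) (X D * pdb_P I D)%:E.

Lemma Ex_ge0 X : (forall D, pdb_dom I D -> (0 <= X D)%R) -> 0 <= Ex X.
Proof.
move=> X0; apply: esum_ge0 => D hD; rewrite lee_fin mulr_ge0 ?X0//.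
exact: pdb_P_ge0.
Qed.

Lemma ExD X Y : (forall D, pdb_dom I D -> (0 <= X D)%R) ->
  (forall D, pdb_dom I D -> (0 <= Y D)%R) ->
  Ex (fun D => X D + Y D)%R = Ex X + Ex Y.
Proof.
move=> X0 Y0; rewrite /Ex -esumD.
- by apply: eq_esum => D _; rewrite mulrDl EFinD.
- by move=> D hD; rewrite lee_fin mulr_ge0 ?X0//; exact: pdb_P_ge0.
- by move=> D hD; rewrite lee_fin mulr_ge0 ?Y0//; exact: pdb_P_ge0.
Qed.

Lemma ExZ (c : R) X : (0 <= c)%R -> (forall D, pdb_dom I D -> (0 <= X D)%R) ->
  Ex (fun D => c * X D)%R = c%:E * Ex X.
Proof.
move=> c0 X0; rewrite /Ex -esumZ//.
- by apply: eq_esum => D _; rewrite -EFinM mulrA.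
- by move=> D hD; rewrite lee_fin mulr_ge0 ?X0//; exact: pdb_P_ge0.
Qed.

Lemma esumP1 : \esum_(D in pdb_dom I) (pdb_P I D)%:E = 1.
Proof. exact: pdb_P_sum1. Qed.

Lemma Ex_le X (M : R) : (forall D, pdb_dom I D -> (0 <= X D <= M)%R) ->
  Ex X <= M%:E.
Proof.
move=> XM.
have M0 : (0 <= M)%R.
  have [D hD] := pdb_dom_nonempty I.
  by have /andP[h1 h2] := XM D hD; apply: le_trans h2.
apply: (@le_trans _ _ (\esum_(D in pdb_dom I) (M%:E * (pdb_P I D)%:E))).
  apply: le_esum => D hD; rewrite -EFinM lee_fin ler_wpM2r//.
    exact: pdb_P_ge0.
  by case/andP: (XM D hD).
rewrite esumZ// ?esumP1 ?mule1// => D hD; rewrite lee_fin; exact: pdb_P_ge0.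
Qed.

Lemma esum_sub_le1 (E : set (instance ar)) :
  \esum_(D in pdb_dom I `&` E) (pdb_P I D)%:E <= 1.
Proof.
rewrite -esumP1 esum_mkcondr; apply: le_esum => D hD.
case: ifP => // _; rewrite lee_fin; exact: pdb_P_ge0.
Qed.

Lemma esum_sub_ge0 (E : set (instance ar)) :
  0 <= \esum_(D in pdb_dom I `&` E) (pdb_P I D)%:E.
Proof. by apply: esum_ge0 => D [hD _]; rewrite lee_fin; exact: pdb_P_ge0. Qed.

Lemma esum_sub_fin (E : set (instance ar)) :
  \esum_(D in pdb_dom I `&` E) (pdb_P I D)%:E \is a fin_num.
Proof.
rewrite ge0_fin_numE ?esum_sub_ge0//.
exact: le_lt_trans (esum_sub_le1 E) (ltry 1).
Qed.

Lemma PrE (E : set (instance ar)) :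
  (Pr I E)%:E = \esum_(D in pdb_dom I `&` E) (pdb_P I D)%:E.
Proof. by rewrite /Pr fineK// esum_sub_fin. Qed.

Lemma Pr_ge0 E : (0 <= Pr I E)%R.
Proof. by rewrite -lee_fin PrE esum_sub_ge0. Qed.

Lemma Pr_le1 E : (Pr I E <= 1)%R.
Proof. by rewrite -lee_fin PrE esum_sub_le1. Qed.

Lemma Ex_ind (E : set (instance ar)) (b : instance ar -> bool) :
  (forall D, b D <-> E D) ->
  Ex (fun D => (b D)%:R) = (Pr I E)%:E.
Proof.
move=> hb; rewrite PrE esum_mkcondr; apply: eq_esum => D _.
case: ifPn => [/set_mem/hb -> | hn]; first by rewrite mul1r.
case hbD: (b D); last by rewrite mul0r.
by exfalso; move/negP: hn; apply; apply/mem_set/hb.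
Qed.

End PDB.

Section TI.
Local Open Scope classical_set_scope.
Local Open Scope ring_scope.
Local Open Scope ereal_scope.
Variables (R : realType) (S : finType) (ar : S -> nat) (I : pdb R ar).
Hypothesis hTI : tuple_independent I.

Definition pf (f : fact ar) : R := Pr I [set D | f \in D].

Lemma pf_ge0 f : (0 <= pf f)%R. Proof. exact: Pr_ge0. Qed.
Lemma pf_le1 f : (pf f <= 1)%R. Proof. exact: Pr_le1. Qed.

Definition QX (t : R) (A B : seq (fact ar)) (D : instance ar) : R :=
  ((all (fun f => f \in D) A)%:R * \prod_(g <- B) (1 + t * (g \in D)%:R))%R.

Lemma QX_ge0 t A B D : (-1 <= t)%R -> (0 <= QX t A B D)%R.
Proof.
move=> ht; rewrite /QX mulr_ge0//; apply: prodr_ge0 => g _.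
by case: (g \in D); rewrite /= ?mulr1 ?mulr0; lra.
Qed.

Lemma ExQ (t : R) : (-1 <= t)%R -> forall B A : seq (fact ar), uniq (A ++ B) ->
  Ex I (QX t A B) = ((\prod_(f <- A) pf f) * \prod_(g <- B) (1 + t * pf g))%:E.
Proof.
move=> ht; elim => [|g B IH] A hu.
  rewrite big_nil mulr1.
  have -> : QX t A [::] = fun D => (all (fun f => f \in D) A)%:R.
    by apply: funext => D; rewrite /QX big_nil mulr1.
  rewrite (@Ex_ind _ _ _ _ [set D | forall f, f \in A -> f \in D]); last first.
    move=> D /=; split.
      by case: (all _ A) /allP => //= h _ f /h.
    by move=> h; case: allP => // -[] f /h.
  by rewrite hTI// ; move: hu; rewrite cats0.
have huA : uniq ((A ++ [:: g]) ++ B) by rewrite -catA.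
have huB : uniq (A ++ B).
  exact: subseq_uniq (cat_subseq (subseq_refl A) (subseq_cons B g)) hu.
have e1 := IH _ huA; have e2 := IH _ huB.
have hX D : (0 <= QX t A B D)%R by apply: QX_ge0.
have hY D : (0 <= QX t (A ++ [:: g]) B D)%R by apply: QX_ge0.
have pw D : QX t A (g :: B) D = (QX t A B D + t * QX t (A ++ [:: g]) B D)%R.
  rewrite /QX big_cons all_cat /= andbT.
  by case: (all _ A); case: (g \in D); rewrite /= ?mul0r ?mulr0 ?addr0 ?mul1r ?mulr1 ?mulrDl ?mul1r.
have target : ((\prod_(f <- A) pf f) * \prod_(g0 <- g :: B) (1 + t * pf g0))%R =
   ((\prod_(f <- A) pf f) * \prod_(g <- B) (1 + t * pf g) +
    t * ((\prod_(f <- A ++ [:: g]) pf f) * \prod_(g <- B) (1 + t * pf g)))%R.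
  rewrite big_cons big_cat big_seq1 /=.
  set a := (\prod_(f <- A) pf f)%R; set b := (\prod_(g <- B) (1 + t * pf g))%R.
  by rewrite mulrDl mul1r mulrDr !mulrA [(a * t)%R]mulrC.
rewrite target.
have [t0|t0] := lerP 0 t.
  have -> : QX t A (g :: B) = fun D => (QX t A B D + t * QX t (A ++ [:: g]) B D)%R.
    by apply: funext => D; rewrite pw.
  rewrite ExD//; last by move=> D _; rewrite mulr_ge0.
  by rewrite ExZ// e1 e2 -EFinM -EFinD.
have ef : (fun D => QX t A (g :: B) D + (- t) * QX t (A ++ [:: g]) B D)%R = QX t A B.
  by apply: funext => D; rewrite pw mulNr addrK.
have nt : (0 <= - t)%R by rewrite oppr_ge0 ltW.
have := @ExD _ _ _ I (QX t A (g :: B)) (fun D => (- t) * QX t (A ++ [:: g]) B D)%R.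
rewrite ef ExZ ?oppr_ge0 ?ltW// e1 e2 => /(_ (fun D _ => QX_ge0 _ _ _ ht)).
move=> /(_ (fun D _ => mulr_ge0 nt (hY D))).
case: (Ex I (QX t A (g :: B))) => [r||] //=.
rewrite -EFinM -EFinD => -[->]; congr EFin.
by rewrite mulNr addrNK.
Qed.

End TI.

Section Real.
Local Open Scope ring_scope.
Variable R : realType.

Lemma prod_half_bound (xs : seq R) : all (fun x => 0 <= x <= 1) xs ->
  [/\ 0 <= \prod_(x <- xs) (1 + - 2^-1 * x),
      \prod_(x <- xs) (1 + - 2^-1 * x) <= 1,
      0 <= \sum_(x <- xs) x &
      (\prod_(x <- xs) (1 + - 2^-1 * x)) * (1 + 2^-1 * \sum_(x <- xs) x) <= 1].
Proof.
elim: xs => [|x xs IH]; first by rewrite !big_nil mulr0 addr0 mulr1; split.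
rewrite /= => /andP[/andP[x0 x1] /IH [h0 h1 h3 h2]].
rewrite !big_cons.
set p := \prod_(x <- xs) _ in h0 h1 h2 *; set s := \sum_(x <- xs) x in h2 h3 *.
have e : (1 + - 2^-1 * x) * p * (1 + 2^-1 * (x + s)) =
  (1 + - 2^-1 * x) * (p * (1 + 2^-1 * s)) + 2^-1 * x * ((1 + - 2^-1 * x) * p).
  by lra.
have a0 : 0 <= 1 + - 2^-1 * x by lra.
have a1 : 1 + - 2^-1 * x <= 1 by lra.
have q0 : 0 <= (1 + - 2^-1 * x) * p by apply: mulr_ge0.
have q1 : (1 + - 2^-1 * x) * p <= 1 + - 2^-1 * x.
  by rewrite -[X in _ <= X]mulr1 ler_wpM2l.
have r1 : (1 + - 2^-1 * x) * (p * (1 + 2^-1 * s)) <= 1 + - 2^-1 * x.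
  by rewrite -[X in _ <= X]mulr1 ler_wpM2l.
have r2 : 2^-1 * x * ((1 + - 2^-1 * x) * p) <= 2^-1 * x.
  rewrite -[X in _ <= X]mulr1 ler_wpM2l//; first by lra.
  by apply: le_trans q1 a1.
split.
- exact: q0.
- by apply: le_trans q1 a1.
- by lra.
- by rewrite e; lra.
Qed.

End Real.

Section TI2.
Local Open Scope classical_set_scope.
Local Open Scope ring_scope.
Local Open Scope ereal_scope.
Variables (R : realType) (S : finType) (ar : S -> nat) (I : pdb R ar).
Hypothesis hTI : tuple_independent I.

Lemma exists_pos : exists2 D0, pdb_dom I D0 & (0 < pdb_P I D0)%R.
Proof.
apply: contrapT => H.
have : \esum_(D in pdb_dom I) (pdb_P I D)%:E = 0.
  apply: esum1 => D hD; congr EFin.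
  have := pdb_P_ge0 hD; rewrite le_eqVlt => /orP[/eqP <- //|h].
  by exfalso; apply: H; exists D.
by rewrite esumP1 => /eqP; rewrite onee_eq0.
Qed.

Lemma prod_count (t : R) (F : seq (fact ar)) (D : instance ar) :
  (\prod_(g <- F) (1 + t * (g \in D)%:R) = (1 + t) ^+ count (fun g => g \in D) F)%R.
Proof.
elim: F => [|g F IH]; first by rewrite big_nil.
rewrite big_cons IH /=; case: (g \in D) => /=.
  by rewrite mulr1 exprS.
by rewrite mulr0 addr0 mul1r add0n.
Qed.

Lemma count_le (F : seq (fact ar)) (D : instance ar) : uniq F ->
  (count (fun g => g \in D) F <= #|` D|)%N.
Proof.
move=> hF; rewrite -size_filter; apply: uniq_leq_size; first exact: filter_uniq.
by move=> x; rewrite mem_filter => /andP[h _].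
Qed.

Lemma count_eq (F : seq (fact ar)) (D : instance ar) : uniq F ->
  {subset (enum_fset D) <= F} -> count (fun g => g \in D) F = #|` D|.
Proof.
move=> hF hs; rewrite -size_filter; apply: perm_size; apply: uniq_perm.
- exact: filter_uniq.
- exact: fset_uniq.
- move=> x; rewrite mem_filter; apply/andP/idP => [[]//|h]; split => //.
  exact: hs.
Qed.

Lemma sum_bound : exists Bd : R, forall F, uniq F -> (\sum_(g <- F) pf I g <= Bd)%R.
Proof.
have [D0 hD0 P0] := exists_pos.
pose c0 := (pdb_P I D0 * (2^-1) ^+ #|` D0|)%R.
have c0p : (0 < c0)%R by rewrite mulr_gt0// exprn_gt0.
exists (2 / c0)%R => F hF.
have ht : (-1 <= - 2^-1 :> R)%R by lra.
have hE := ExQ hTI ht (A := [::]) hF.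
have lo : c0%:E <= Ex I (QX (- 2^-1) [::] F).
  apply: esum_ge; exists [set D0].
    split; first exact: finite_set1.
    by move=> x ->.
  rewrite fsbig_set1 lee_fin /QX /= mul1r prod_count mulrC ler_wpM2l//.
    exact: pdb_P_ge0.
  have -> : (1 + - 2^-1 = 2^-1 :> R)%R by lra.
  apply: ler_wiXn2l; [lra|lra|exact: count_le].
rewrite hE big_nil mul1r lee_fin in lo.
have := @prod_half_bound R [seq pf I g | g <- F].
rewrite !big_map => -[].
  by apply/allP => x /mapP [g _ ->]; rewrite pf_ge0 pf_le1.
move=> h0 h1 h3 h2.
rewrite ler_pdivlMr//.
set s := (\sum_(g <- F) pf I g)%R in h2 h3 *.
set p := (\prod_(g <- F) _)%R in h0 h1 h2 lo.
have : (c0 * (1 + 2^-1 * s) <= 1)%R.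
  by apply: le_trans h2; rewrite ler_wpM2r//; lra.
nra.
Qed.

End TI2.

Section TI3.
Local Open Scope classical_set_scope.
Local Open Scope ring_scope.
Local Open Scope ereal_scope.
Variables (R : realType) (S : finType) (ar : S -> nat) (I : pdb R ar).
Hypothesis hTI : tuple_independent I.

Lemma expo_bound : exists M : R, Ex I (fun D => expR (#|` D|%:R)) <= M%:E.
Proof.
have [Bd hB] := sum_bound hTI.
pose t : R := (expR 1 - 1)%R.
have t0 : (0 <= t)%R.
  by have := @expR_ge1Dx R 1; rewrite /t; lra.
have ht : (-1 <= t)%R by lra.
exists (expR (t * Bd)).
rewrite /Ex /esum; apply: ge_ereal_sup => _ [X [finX Xsub] <-].
pose Fs := undup (flatten [seq enum_fset D | D <- fset_set X]).
have uFs : uniq Fs by exact: undup_uniq.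
have key D : X D -> expR (#|` D|%:R) = QX t [::] Fs D.
  move=> XD; rewrite /QX /= mul1r prod_count count_eq//.
    by rewrite /t addrC subrK -expRM_natl mulr1.
  move=> f hf; rewrite mem_undup; apply/flattenP; exists (enum_fset D) => //; apply: (@map_f _ _ (fun D : instance ar => enum_fset D)).
  by rewrite in_fset_set// mem_set.
apply: (@le_trans _ _ (Ex I (QX t [::] Fs))).
  rewrite (eq_fsbigr (fun D => (QX t [::] Fs D * pdb_P I D)%:E)); last first.
    by move=> D /set_mem XD; rewrite key.
  by apply: esum_ge; exists X.
rewrite (ExQ hTI ht (A := [::]) uFs) big_nil mul1r lee_fin.

apply: (@le_trans _ _ (\prod_(g <- Fs) expR (t * pf I g))%R).
  apply: ler_prod => g _; rewrite expR_ge1Dx andbT.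
  by have := pf_ge0 I g; nra.
by rewrite -expR_sum -mulr_sumr ler_expR ler_wpM2l // hB.
Qed.

End TI3.

Section View.
Local Open Scope nat_scope.

Lemma size_tuples (s : seq U) n : size (tuples s n) = size s ^ n.
Proof.
elim: n => [|n IH] //=; by rewrite size_allpairs IH expnS.
Qed.

Lemma leq_expl m n e : m <= n -> m ^ e <= n ^ e.
Proof.
move=> h; elim: e => [|e IH]; first by [].
by rewrite !expnS leq_mul.
Qed.

Lemma size_flatten_le (T : eqType) (T' : Type) (G : T -> seq T') (rs : seq T) B :
  (forall r, r \in rs -> size (G r) <= B) ->
  size (flatten [seq G r | r <- rs]) <= size rs * B.
Proof.
elim: rs => [|r rs IH] h //=.
rewrite size_cat mulSn leq_add ?h ?mem_head// IH// => r' hr'.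
by apply: h; rewrite in_cons hr' orbT.
Qed.

Variables (S : finType) (ar : S -> nat) (S' : finType) (ar' : S' -> nat).

Lemma size_adom (D : instance ar) : size (adom D) <= #|` D| * \max_(r : S) ar r.
Proof.
rewrite /adom; apply: size_flatten_le => f _.
by rewrite (eqP (valP f)); exact: leq_bigmax.
Qed.

Lemma view_card (V : fo_view ar ar') : exists m d : nat,
  forall D, #|` view_inst V D| <= m * (#|` D|).+1 ^ d.
Proof.
pose am := \max_(r : S) ar r.
pose c := \max_(R : S') size (consts (vphi V R)).
pose d := \max_(R : S') ar' R.
exists (#|S'| * (am + c + 1) ^ d), d => D.
rewrite /view_inst card_fseq.
apply: (leq_trans (size_undup _)).
apply: (leq_trans (n := size (flatten [seq [seq (R, a) | a <- tuples (adom D ++ consts (vphi V R)) (ar' R)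
                               & sat D (vphi V R) a] | R <- enum S']))).
  by rewrite size_pmap count_size.
rewrite -mulnA -expnMn.
apply: (leq_trans (size_flatten_le (B := ((am + c + 1) * (#|` D|).+1) ^ d) _)).
  move=> R _; rewrite size_map size_filter.
  apply: (leq_trans (count_size _ _)).
  rewrite size_tuples size_cat.
  apply: (@leq_trans (((am + c + 1) * (#|` D|).+1) ^ ar' R)).
    apply: leq_expl.
    have h1 := size_adom D.
    have h2 : size (consts (vphi V R)) <= c by exact: leq_bigmax.
    rewrite -/am in h1.
    nia.
  apply: leq_pexp2l; first by rewrite muln_gt0 addn1.
  exact: leq_bigmax.
by rewrite cardE.
Qed.

End View.

Section Final.
Local Open Scope ring_scope.

Lemma pow_expR (R : realType) (n K : nat) :
  (n.+1%:R : R) ^+ K <= K.+1`!%:R * expR (n.+1%:R).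
Proof.
set x : R := n.+1%:R.
have x1 : 1 <= x by rewrite /x ler1n.
have f0 : (0 : R) < K.+1`!%:R by rewrite ltr0n fact_gt0.
have h := @expR_ge1Dxn R x K (le_trans ler01 x1).
have h2 : x ^+ K <= x ^+ K.+1.
  by rewrite exprS ler_peMl// exprn_ge0// (le_trans ler01 x1).
apply: (le_trans h2).
have -> : x ^+ K.+1 = K.+1`!%:R * (x ^+ K.+1 / K.+1`!%:R).
  by rewrite mulrC divfK ?gt_eqF.
rewrite ler_wpM2l ?ltW//.
have : 0 <= x ^+ K.+1 / K.+1`!%:R.
  by apply: divr_ge0; [apply: exprn_ge0; exact: le_trans ler01 x1 | exact: ltW].
lra.
Qed.

Lemma view_pow (R : realType) (m d k n v : nat) :
  (v <= m * n.+1 ^ d)%N ->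
  (v%:R : R) ^+ k <= ((m ^ k)%:R * (d * k).+1`!%:R * expR 1) * expR n%:R.
Proof.
move=> hv.
have h1 : (v ^ k <= m ^ k * n.+1 ^ (d * k))%N.
  by rewrite expnM -expnMn leq_expl.
apply: (@le_trans _ _ ((m ^ k * n.+1 ^ (d * k))%N%:R)).
  by rewrite -natrX ler_nat.
rewrite natrM natrX -!mulrA ler_wpM2l//.
rewrite natrX -expRD (addrC 1) natr1.
exact: pow_expR.
Qed.

End Final.

Unset Implicit Arguments.
Set Strict Implicit.

Theorem proposition3p7 (R : realType) (S' : finType) (ar' : S' -> nat)
  (J : pdb R ar') :
  (0 < #|S'|)%N -> in_FO_TI J -> finite_moments (pdb_dom J) (pdb_P J).
Proof.
move=> _ [S [ar [I [V [_ [hTI [hdom hP]]]]]]] k _.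
have [M hM] := expo_bound hTI.
have [m [d hV]] := view_card V.
pose C : R := (((m ^ k)%:R * (d * k).+1`!%:R * expR 1))%R.
have C0 : (0 <= C)%R by rewrite /C !mulr_ge0// expR_ge0.
Local Open Scope ring_scope.
Local Open Scope ereal_scope.
Local Open Scope classical_set_scope.
have e1 : \esum_(D' in pdb_dom J) ((#|` D'|%:R ^+ k * pdb_P J D')%:E) =
   \esum_(D' in view_inst V @` pdb_dom I)
     \esum_(D in pdb_dom I `&` [set D | view_inst V D = D'])
        ((#|` view_inst V D|%:R ^+ k * pdb_P I D)%:E).
  rewrite hdom; apply: eq_esum => D' hD'.
  rewrite hP ?hdom// EFinM PrE -esumZ.
  - by apply: eq_esum => D [_ /= ->]; rewrite EFinM.
  - by rewrite exprn_ge0.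
  - by move=> D [hD _]; rewrite lee_fin; exact: pdb_P_ge0.
rewrite e1 esum_esum; last first.
  by move=> D' D _ [hD _]; rewrite lee_fin mulr_ge0 ?exprn_ge0//; exact: pdb_P_ge0.
have e2 : view_inst V @` pdb_dom I `*`` (fun D' => pdb_dom I `&` [set D | view_inst V D = D'])
   = (fun D => (view_inst V D, D)) @` pdb_dom I.
  apply/seteqP; split => -[x y] /=.
    by move=> [_ [hy <-]]; exists y.
  move=> [D hD [<- <-]]; split => //; by exists D.
rewrite e2 esum_image; last by move=> a b _ _ [].
apply: (@le_lt_trans _ _ (C%:E * Ex I (fun D => expR (#|` D|%:R)))).
  rewrite -(@ExZ _ _ _ I C _ C0); last by move=> D _; exact: expR_ge0.
  rewrite /Ex; apply: le_esum => D hD /=; rewrite lee_fin ler_wpM2r//; first exact: pdb_P_ge0.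
  exact: view_pow (hV D).
apply: (@le_lt_trans _ _ (C%:E * M%:E)).
  by rewrite lee_wpmul2l// lee_fin.
by rewrite -EFinM ltry.
Qed.
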